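(* For any graph class $\mathcal{C}$ the following are equivalent: (i) $\mathcal{C}$ has bounded expansion; (ii) for every $r \in \mathbb{N}$ there exists $m\in\mathbb{N}$ such that every vertex of every graph in $\mathcal{C}$ has finite $(r,m)$-rank (i.e. $(r,m)$-rank not equal to $\infty$).
   Context: Bounded expansion is in the sense of Nešetřil and Ossona de Mendez. Graphs are finite and simple. $N_r^G(v)$ is the closed $r$-neighborhood of $v$ (vertices reachable from $v$ by a path with at most $r$ edges, including $v$); $G-S$ is the subgraph induced on $V(G)\setminus S$. The $(r,m)$-rank of vertices of $G$ (values in $\mathbb{N}\cup\{\infty\}$) is defined by the following procedure: initially every vertex has rank $\infty$; in rounds $i=1,2,3,\dots$, every vertex $v$ that currently has rank $\infty$ receives rank $i$ if there exists a set $S\subseteq V(G)\setminus\{v\}$ with $|S|\le m$ such that every vertex of $N_r^{G-S}(v)\setminus\{v\}$ received a finite rank in rounds $1,\dots,i-1$ (all vertices are checked simultaneously in a round); the procedure stops when all vertices have finite rank or a round assigns no new rank. Vertices still of rank $\infty$ keep rank $\infty$. *)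

(* Defs.v *)
From mathcomp Require Import all_boot.
Set Implicit Arguments. Unset Strict Implicit. Unset Printing Implicit Defensive.

Record graph := Graph {
  gn : nat;
  gadj : rel 'I_gn;
  gsym : symmetric gadj;
  girr : irreflexive gadj }.

Definition gV (G : graph) := 'I_(gn G).

Definition nedges (G : graph) : nat :=
  #|[set p : gV G * gV G | (p.1 < p.2)%N && gadj p.1 p.2]|.

(* ball e A v k: vertices reachable from v by a path with at most k edges
   all of whose vertices lie in A (v itself is included iff v \in A).
   With A = ~: S and v \notin S this is N_k^{G-S}(v). *)
Fixpoint ball (T : finType) (e : rel T) (A : {set T}) (v : T) (k : nat)
  : {set T} :=
  match k with
  | 0 => A :&: [set v]
  | k'.+1 => ball e A v k' :|:
             [set y in A | [exists x in ball e A v k', e x y]]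
  end.

Definition shallow_minor (r : nat) (H G : graph) : Prop :=
  exists B : gV H -> {set gV G},
    (forall u w : gV H, u != w -> [disjoint B u & B w]) /\
    (forall u : gV H, exists2 c, c \in B u & B u \subset ball (gadj (g:=G)) (B u) c r) /\
    (forall u w : gV H, gadj u w ->
        exists x y, [/\ x \in B u, y \in B w & gadj x y]).

Definition bounded_expansion (C : graph -> Prop) : Prop :=
  exists f : nat -> nat, forall G, C G -> forall (r : nat) (H : graph),
    shallow_minor r H G -> (nedges H <= f r * gn H)%N.

(* ranked G r m i: the set of vertices that received a finite rank in
   rounds 1..i of the (r,m)-rank procedure. *)
Fixpoint ranked (G : graph) (r m : nat) (i : nat) : {set gV G} :=
  match i with
  | 0 => set0
  | i'.+1 => ranked G r m i' :|:
      [set v | [exists S : {set gV G},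
         [&& v \notin S, (#|S| <= m)%N &
             (ball (gadj (g:=G)) (~: S) v r :\ v) \subset ranked G r m i']]]
  end.

Definition finite_rank (G : graph) (r m : nat) (v : gV G) : Prop :=
  exists i, v \in ranked G r m i.
Arguments finite_rank : clear implicits.
Arguments ranked : clear implicits.

(* Main.v *)
Require Import Defs.
From mathcomp Require Import all_boot.
From mathcomp Require Import zify.
From Stdlib Require Import Classical ClassicalEpsilon Lia.
Set Implicit Arguments. Unset Strict Implicit. Unset Printing Implicit Defensive.

Section Ball.
Variables (T : finType) (e : rel T).
Implicit Types (A : {set T}).

Lemma ball_sub A v k : ball e A v k \subset A.
Proof.
elim: k => [|k IH] /=; first exact: subsetIl.
apply/subsetP => x; rewrite !inE => /orP[/(subsetP IH)//|/andP[]//].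
Qed.

Lemma ball_mono A A' v k k' : A \subset A' -> k <= k' ->
  ball e A v k \subset ball e A' v k'.
Proof.
move=> sAA' lekk'.
have h1 : forall k, ball e A v k \subset ball e A' v k.
  elim=> [|j IH] /=; first exact: setSI.
  apply/subsetP => x; rewrite !inE => /orP[/(subsetP IH)->//|/andP[xA /existsP[y /andP[yb eyx]]]].
  apply/orP; right; rewrite (subsetP sAA') //=; apply/existsP; exists y.
  by rewrite (subsetP IH).
have h2 : forall j, ball e A' v k \subset ball e A' v (k + j).
  elim=> [|j IH]; first by rewrite addn0.
  rewrite addnS /=; apply: subset_trans IH _; exact: subsetUl.
apply: subset_trans (h1 k) _; rewrite -(subnKC lekk'); exact: h2.
Qed.

Lemma ball_memS A v k x : x \in ball e A v k -> x \in ball e A v k.+1.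
Proof. by move=> h /=; rewrite inE h. Qed.

Lemma ball_le A v k k' x : k <= k' -> x \in ball e A v k -> x \in ball e A v k'.
Proof. by move=> le; apply/subsetP/ball_mono. Qed.

Lemma ball_step A v k x y : x \in ball e A v k -> y \in A -> e x y ->
  y \in ball e A v k.+1.
Proof.
move=> xb yA exy /=; rewrite !inE yA /=; apply/orP; right.
by apply/existsP; exists x; rewrite xb.
Qed.

Lemma ball0 A v : v \in A -> v \in ball e A v 0.
Proof. by move=> vA /=; rewrite !inE vA eqxx. Qed.

Lemma ball_center A v k x : x \in ball e A v k -> v \in A.
Proof.
elim: k x => [|k IH] x /=; first by rewrite !inE => /andP[xA /eqP <-].
rewrite !inE => /orP[/IH//|/andP[_ /existsP[y /andP[/IH ? _]]]] //.
Qed.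

Lemma ball_trans A v k y l z : y \in ball e A v k -> z \in ball e A y l ->
  z \in ball e A v (k + l).
Proof.
move=> yb; elim: l z => [|l IH] z /=.
  by rewrite !inE addn0 => /andP[_ /eqP ->].
rewrite addnS !inE => /orP[/IH h|/andP[zA /existsP[x /andP[/IH xb exz]]]].
  by rewrite h.
apply/orP; right; rewrite zA; apply/existsP; exists x; by rewrite xb.
Qed.

Lemma ball_sym A v k y : symmetric e -> y \in ball e A v k -> v \in ball e A y k.
Proof.
move=> esym; elim: k y => [|k IH] y /=.
  by rewrite !inE => /andP[yA /eqP yv]; subst y; rewrite yA eqxx.
move=> /setUP[/IH h|]; first by apply: ball_memS.
rewrite inE => /andP[yA /existsP[x /andP[xb exy]]].
have vx := IH _ xb.
have xy : x \in ball e A y 1.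
  apply: (ball_step (k:=0)); first exact: ball0.
    by apply/(subsetP (ball_sub A v k)).
  by rewrite esym.
by have := ball_trans xy vx; rewrite add1n => ->.
Qed.

Lemma ball_path A v k u : u \in ball e A v k -> u != v ->
  exists s, [/\ path e v s, last v s = u, size s <= k, all (mem A) s & v \notin s].
Proof.
elim: k u => [|k IH] u /=; first by rewrite !inE => /andP[_ ->].
rewrite !inE => /orP[ub uv|/andP[uA /existsP[x /andP[xb exu]]] uv].
  by have [s [? ? ? ? ?]] := IH _ ub uv; exists s; split => //; apply: leqW.
case: (eqVneq x v) => [xv|xv].
  exists [:: u]; split => //=; first by rewrite -xv exu.
  - by rewrite uA.
  - by rewrite inE eq_sym.
have [s [ps ls ss aS vs]] := IH _ xb xv.
exists (rcons s u); split.
- by rewrite rcons_path ps ls.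
- by rewrite last_rcons.
- by rewrite size_rcons.
- by rewrite all_rcons aS andbT.
- by rewrite mem_rcons inE negb_or eq_sym uv.
Qed.

Lemma path_ball A v s : path e v s -> v \in A -> all (mem A) s ->
  forall x, x \in v :: s -> x \in ball e A v (size s).
Proof.
move=> + vA; elim/last_ind: s => [|s y IH]; first by move=> _ _ x; rewrite inE => /eqP->; exact: ball0.
rewrite rcons_path all_rcons size_rcons.
move=> /andP[ps ey] /andP[yA aA] x; rewrite -rcons_cons mem_rcons inE => /orP[/eqP->|xs].
  apply: (ball_step (x:=last v s)) => //; apply: IH => //; exact: mem_last.
by apply: ball_memS; apply: IH.
Qed.

Lemma ball_cross A (S : {set T}) v k u : u \in ball e A v k ->
  u \notin ball e (A :&: ~: S) v k -> v \notin S ->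
  exists s j, [/\ s \in S, s \in A, j < k & u \in ball e A s j].
Proof.
move=> + + vS; elim: k u => [|k IH] u.
  rewrite /= !inE => /andP[uA /eqP uv]; subst u; by rewrite uA vS eqxx.
move=> /setUP[ub nub|].
  have nub' : u \notin ball e (A :&: ~: S) v k.
    by apply: contra nub; apply: ball_memS.
  have [s [j [? ? ? ?]]] := IH _ ub nub'; exists s, j; split => //; exact: ltnW.
rewrite inE => /andP[uA /existsP[x /andP[xb exu]]] nub.
case xb' : (x \in ball e (A :&: ~: S) v k).
  case uS : (u \in S).
    by exists u, 0; split => //; exact: ball0.
  by move: nub; rewrite (ball_step xb') // !inE uA uS.
have [s [j [? ? ? sb]]] := IH _ xb (negbT xb').
exists s, j.+1; split => //; exact: ball_step sb uA exu.
Qed.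

End Ball.

Lemma card_bigcup_leq (I T : finType) (A : {set I}) (F : I -> {set T}) :
  #|\bigcup_(i in A) F i| <= \sum_(i in A) #|F i|.
Proof.
apply: (@big_ind2 _ _ (fun (X : {set T}) (n : nat) => #|X| <= n)); first by rewrite cards0.
  move=> X1 n1 X2 n2 h1 h2; apply: leq_trans (leq_card_setU _ _) _; exact: leq_add.
by [].
Qed.

Lemma ranked_mono G r m i j : i <= j -> ranked G r m i \subset ranked G r m j.
Proof.
move=> /subnKC <-; elim: (j - i) => [|k IH]; first by rewrite addn0.
rewrite addnS; apply: subset_trans IH _ => /=; exact: subsetUl.
Qed.

Lemma arith_4r r : (r + r).+1 + (r + r) = 4 * r + 1.
Proof. lia. Qed.

Section Rank.
Variables (G : graph) (R m : nat).
Hypothesis hfin : forall v, finite_rank G R m v.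

Definition rk (v : gV G) : nat := ex_minn (hfin v).

Lemma rk_in v : v \in ranked G R m (rk v).
Proof. rewrite /rk; by case: ex_minnP. Qed.

Lemma rk_min v i : v \in ranked G R m i -> rk v <= i.
Proof. rewrite /rk; case: ex_minnP => j _ h; exact: h. Qed.

Lemma rk_S v : exists S : {set gV G}, [/\ v \notin S, #|S| <= m &
  forall u, u \in ball (gadj (g:=G)) (~: S) v R -> u != v -> rk u < rk v].
Proof.
have := rk_in v; case E : (rk v) => [|i]; first by rewrite /= inE.
rewrite /= => /setUP[vi|]; first by have := rk_min vi; rewrite E ltnn.
rewrite inE => /existsP[S /and3P[vS cS sub]].
exists S; split => // u ub uv.
have : u \in ranked G R m i by apply: (subsetP sub); rewrite !inE uv.
by move=> /rk_min.
Qed.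

Definition Bmax := \max_(v : gV G) rk v.
Definition key (v : gV G) : nat := (Bmax - rk v) * gn G + v.

Lemma rk_le v : rk v <= Bmax.
Proof. rewrite /Bmax; exact: (@leq_bigmax (ordinal (gn G)) (fun v => rk v) v). Qed.

Lemma key_inj : injective key.
Proof.
move=> u v; rewrite /key => h; apply: val_inj => /=.
have := congr1 (fun x => x %% gn G) h.
by rewrite /= !modnMDl !modn_small.
Qed.

Lemma key_rk u v : key u < key v -> rk v <= rk u.
Proof.
rewrite /key => h; rewrite leqNgt; apply/negP => lt.
have hv := rk_le v; have hu := rk_le u.
have lt2 : Bmax - rk v < Bmax - rk u.
  lia.
have : (Bmax - rk v) * gn G + v < (Bmax - rk u) * gn G + u.
  apply: (@leq_trans ((Bmax - rk v).+1 * gn G)).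
    rewrite mulSn; have := ltn_ord v; rewrite /gV; lia.
  apply: leq_trans (leq_addr _ _); exact: leq_mul.
by rewrite ltnNge ltnW.
Qed.

Definition WR k (v : gV G) : {set gV G} :=
  [set u | (key u <= key v) && (u \in ball (gadj (g:=G)) [set y | key u <= key y] v k)].

Lemma WR_card k : k <= R -> forall v, #|WR k v| <= m.+1 ^ k.
Proof.
elim: k => [|k IH] kR v.
  rewrite expn0; apply: (@leq_trans #|[set v]|); last by rewrite cards1.
  apply: subset_leq_card; apply/subsetP => u; rewrite !inE => /andP[_ /andP[_ ->]] //.
have [S [vS cS hS]] := rk_S v.
have sub : WR k.+1 v \subset v |: \bigcup_(s in S) WR k s.
  apply/subsetP => u; rewrite inE => /andP[kuv ub].
  rewrite !inE; case: (eqVneq u v) => [//|uv] /=.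
  have kuv' : key u < key v.
    by rewrite ltn_neqAle kuv andbT; apply: contra uv => /eqP/key_inj ->.
  have nub : u \notin ball (gadj (g:=G)) ([set y | key u <= key y] :&: ~: S) v k.+1.
    apply/negP => ub'.
    have ub2 : u \in ball (gadj (g:=G)) (~: S) v R.
      by apply: (subsetP (ball_mono _ v (subsetIr _ _) kR)) ub'.
    by have := hS u ub2 uv; rewrite ltnNge key_rk.
  have [s [j [sS sA jk ub3]]] := ball_cross ub nub vS.
  apply/bigcupP; exists s => //; rewrite inE.
  move: sA; rewrite inE => -> /=; apply: ball_le ub3; by [].
apply: leq_trans (subset_leq_card sub) _.
apply: leq_trans (leq_card_setU _ _) _; rewrite cards1.
apply: (@leq_trans (1 + \sum_(s in S) m.+1 ^ k)).
  rewrite leq_add2l; apply: leq_trans (card_bigcup_leq _ _) _.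
  apply: leq_sum => s _; apply: IH; exact: ltnW.
rewrite sum_nat_const expnS.
apply: (@leq_trans (1 + m * m.+1 ^ k)); first by rewrite leq_add2l leq_mul2r cS orbT.
rewrite mulSn leq_add2r expn_gt0.
by [].
Qed.

Lemma minor_density r (H : graph) : shallow_minor r H G -> R = 4 * r + 1 ->
  nedges H <= m.+1 ^ R * gn H.
Proof.
move=> [B [Bdis [Bcen Bedge]]] ER.
have [cen hcin hcsub] := fin_all_exists2 Bcen.
have hmu0 : forall u, exists x, x \in B u /\ forall y, y \in B u -> key x <= key y.
  move=> u; case: (arg_minnP key (hcin u)) => x xB xmin; by exists x.
have [mu hmu] := fin_all_exists hmu0.
have mu_inj : forall u w, mu u = mu w -> u = w.
  move=> u w h; apply/eqP; apply/negPn/negP => uw.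
  have := Bdis _ _ uw; rewrite disjoint_subset => /subsetP/(_ (mu u)).
  by rewrite (hmu u).1 !inE h (hmu w).1 => /(_ isT).
pose phi (p : gV H * gV H) : gV H * gV G :=
  if key (mu p.2) < key (mu p.1) then (p.1, mu p.2) else (p.2, mu p.1).
pose E := [set p : gV H * gV H | (p.1 < p.2)%N && gadj p.1 p.2].
pose Y := [set q : gV H * gV G | q.2 \in WR R (mu q.1)].
have gsymH := @gsym H; have gsymG := @gsym G.
have keyne : forall u w, u != w -> key (mu u) != key (mu w).
  move=> u w; apply: contra => /eqP/key_inj/mu_inj ->; by [].
have reach : forall a b, gadj a b -> key (mu b) < key (mu a) ->
    mu b \in WR R (mu a).
  move=> a b ab lt; rewrite inE (ltnW lt) /=.
  set A := [set y | key (mu b) <= key y].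
  have BA : forall y, y \in B a -> y \in A.
    move=> y yB; rewrite inE; apply: leq_trans (ltnW lt) _; exact: (hmu a).2.
  have BbA : forall y, y \in B b -> y \in A.
    move=> y yB; rewrite inE; exact: (hmu b).2.
  have sBA : B a \subset A by apply/subsetP.
  have sBbA : B b \subset A by apply/subsetP.
  have [x [y [xB yB exy]]] := Bedge _ _ ab.
  have ca_sub := hcsub a; have cb_sub := hcsub b.
  have h1 : cen a \in ball (gadj (g:=G)) (B a) (mu a) r.
    apply: ball_sym => //; exact: (subsetP ca_sub) (hmu a).1.
  have h2 : x \in ball (gadj (g:=G)) (B a) (mu a) (r + r).
    apply: ball_trans h1 _; exact: (subsetP ca_sub).
  have h3 : y \in ball (gadj (g:=G)) A (mu a) (r + r).+1.
    apply: ball_step _ (BbA _ yB) exy.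
    exact: (subsetP (ball_mono _ _ sBA (leqnn _))).
  have h4 : cen b \in ball (gadj (g:=G)) (B b) y r.
    apply: ball_sym => //; exact: (subsetP cb_sub).
  have h5 : mu b \in ball (gadj (g:=G)) A y (r + r).
    apply: (subsetP (ball_mono _ _ sBbA (leqnn _))).
    apply: ball_trans h4 _; exact: (subsetP cb_sub) (hmu b).1.
  have := ball_trans h3 h5; rewrite ER.
  rewrite arith_4r.
  by [].
have phiY : forall p, p \in E -> phi p \in Y.
  move=> [u w]; rewrite inE /= => /andP[uw adj].
  have neq : u != w by apply: contraTneq uw => ->; rewrite ltnn.
  rewrite /phi /=; case: ifP => lt; rewrite inE /=.
    exact: reach.
  apply: reach; first by rewrite gsymH.
  by rewrite ltn_neqAle keyne // leqNgt lt.
have phi_inj : {in E &, injective phi}.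
  have shape : forall p, exists a b, phi p = (a, mu b) /\ (p = (a, b) \/ p = (b, a)).
    move=> [u w]; rewrite /phi /=; case: ifP => _.
      by exists u, w; split => //; left.
    by exists w, u; split => //; right.
  move=> p q pE qE; have [a [b [-> hp]]] := shape p; have [a' [b' [-> hq]]] := shape q.
  case=> ea /mu_inj eb; subst a' b'.
  move: pE qE; rewrite !inE.
  by case: hp => ->; case: hq => -> //= /andP[l1 _] /andP[l2 _];
     move: (ltn_trans l1 l2); rewrite ltnn.
have cardE : #|E| <= #|Y|.
  rewrite -(card_in_imset phi_inj); apply: subset_leq_card.
  by apply/subsetP => q /imsetP[p pE ->]; apply: phiY.
apply: leq_trans cardE _.
have sY : Y \subset \bigcup_(a in [set: gV H]) [set (a, z) | z in WR R (mu a)].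
  apply/subsetP => [[a z]]; rewrite inE /= => zW; apply/bigcupP; exists a; first by rewrite inE.
  by apply/imsetP; exists z.
apply: leq_trans (subset_leq_card sY) _.
apply: leq_trans (card_bigcup_leq _ _) _.
apply: (@leq_trans (\sum_(a in [set: gV H]) m.+1 ^ R)).
  apply: leq_sum => a _; rewrite card_imset; last by move=> z1 z2 [].
  exact: WR_card.
by rewrite sum_nat_const cardsT card_ord mulnC.
Qed.

End Rank.

Definition linked (T : finType) (e : rel T) (X Y : {set T}) :=
  [exists x in X, exists y in Y, e x y].

Definition model (T : finType) (e : rel T) t (B : T -> {set T}) (J : {set T}) : Prop :=
  (forall u, u \in J -> u \in B u /\ B u \subset ball e (B u) u t) /\
  (forall u w, u \in J -> w \in J -> u != w -> [disjoint B u & B w]).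

Definition mpairs (T : finType) (e : rel T) (B : T -> {set T}) (J : {set T}) :=
  [set p : T * T | [&& p.1 \in J, p.2 \in J, p.1 != p.2 & linked e (B p.1) (B p.2)]].

Definition BEt (T : finType) (f : nat -> nat) (e : rel T) (W : {set T}) : Prop :=
  forall t (B : T -> {set T}) (J : {set T}), (forall u, u \in J -> B u \subset W) -> model e t B J ->
    #|mpairs e B J| <= 2 * f t * #|J|.

Lemma linked_sym (T : finType) (e : rel T) (X Y : {set T}) : symmetric e -> linked e X Y -> linked e Y X.
Proof.
move=> es /existsP[x /andP[xX /existsP[y /andP[yY exy]]]].
apply/existsP; exists y; rewrite yY; apply/existsP; exists x; by rewrite xX es.
Qed.

Lemma linkedP (T : finType) (e : rel T) (X Y : {set T}) :
  reflect (exists x y, [/\ x \in X, y \in Y & e x y]) (linked e X Y).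
Proof.
apply: (iffP idP).
  by move=> /existsP[x /andP[xX /existsP[y /andP[yY exy]]]]; exists x, y.
move=> [x [y [xX yY exy]]]; apply/existsP; exists x; rewrite xX; apply/existsP; exists y; by rewrite yY.
Qed.

Lemma pairs2 (H : graph) :
  #|[set p : gV H * gV H | gadj p.1 p.2]| = 2 * nedges H.
Proof.
pose E := [set p : gV H * gV H | (p.1 < p.2)%N && gadj p.1 p.2].
pose sw (p : gV H * gV H) := (p.2, p.1).
have swi : injective sw by move=> [a b] [c d] [-> ->].
have -> : [set p : gV H * gV H | gadj p.1 p.2] = E :|: sw @: E.
  apply/setP => [[a b]]; rewrite !inE /=.
  apply/idP/idP.
    move=> ab; case: (ltngtP a b) => [lt|gt|eq].
    - by rewrite ab.
    - apply/orP; right; apply/imsetP; exists (b, a) => //.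
      by rewrite inE /= gt (@gsym H).
    - by move: ab; rewrite (val_inj eq) (@girr H).
  move=> /orP[/andP[_ ->]//|/imsetP[[c d]]]; rewrite inE /= => /andP[_ cd] [-> ->].
  by rewrite (@gsym H).
have dis : [disjoint E & sw @: E].
  rewrite -setI_eq0; apply/eqP/setP => [[a b]]; rewrite !inE /=.
  apply/negP => /andP[/andP[ab _] /imsetP[[c d]]]; rewrite inE /= => /andP[cd _] [e1 e2].
  subst; move: (ltn_trans ab cd); by rewrite ltnn.
rewrite cardsU; have -> : E :&: sw @: E = set0 by apply/eqP; rewrite setI_eq0.
by rewrite cards0 subn0 card_imset // addnn -mul2n.
Qed.

Lemma BE_graph (C : graph -> Prop) (f : nat -> nat) G :
  (forall G, C G -> forall r H, shallow_minor r H G -> nedges H <= f r * gn H) ->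
  C G -> BEt f (gadj (g:=G)) setT.
Proof.
move=> hbe CG t B J _ [hcen hdis].
have es := @gsym G.
pose adj (i j : 'I_#|J|) := (i != j) && linked (gadj (g:=G)) (B (enum_val i)) (B (enum_val j)).
have asym : symmetric adj.
  move=> i j; rewrite /adj eq_sym; apply/idP/idP => /andP[-> l]; by rewrite linked_sym.
have airr : irreflexive adj by move=> i; rewrite /adj eqxx.
pose H := Graph asym airr.
have sm : shallow_minor t H G.
  exists (fun i => B (enum_val i)); split; last split.
  - move=> i j ij; apply: hdis; try exact: enum_valP.
    by apply: contra ij => /eqP/enum_val_inj ->.
  - move=> i; exists (enum_val i); by have [] := hcen _ (enum_valP i).
  - move=> i j /andP[_ /linkedP [x [y [? ? ?]]]]; by exists x, y.
have h : #|[set p : gV H * gV H | gadj p.1 p.2]| <= 2 * f t * #|J|.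
  rewrite pairs2 -mulnA leq_pmul2l //; exact: (hbe G CG t H sm).
apply: (leq_trans _ h).
pose g (p : 'I_#|J| * 'I_#|J|) := (enum_val p.1, enum_val p.2).
have gi : injective g by move=> [a b] [c d] [/enum_val_inj -> /enum_val_inj ->].
rewrite -(card_imset _ gi); apply: subset_leq_card; apply/subsetP => [[u w]].
rewrite inE /= => /and4P[uJ wJ uw l]; apply/imsetP.
exists (enum_rank_in uJ u, enum_rank_in uJ w); last by rewrite /g /= !enum_rankK_in.
rewrite inE /= /adj !enum_rankK_in // l andbT.
by apply: contra uw => /eqP/(congr1 enum_val); rewrite !enum_rankK_in // => ->.
Qed.

Lemma arith_c1 k b : (k * (2 * b + 1) + b).+1 + (b + b) = k.+1 * (2 * b + 1) + b.
Proof. rewrite mulSn; lia. Qed.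
Lemma arith_c2 k b : k * (2 * b + 1) + b <= k.+1 * (2 * b + 1) + b.
Proof. by rewrite leq_add2r leq_mul2r leqnSn orbT. Qed.

Lemma BE_compose (T : finType) f (e : rel T) (W W' : {set T}) (beta : T -> {set T}) b :
  symmetric e -> BEt f e W ->
  (forall x, x \in W' -> [/\ x \in beta x, beta x \subset ball e (beta x) x b & beta x \subset W]) ->
  (forall x y, x \in W' -> y \in W' -> x != y -> [disjoint beta x & beta y]) ->
  BEt (fun t => f (t * (2 * b + 1) + b)) (fun x y => (x != y) && linked e (beta x) (beta y)) W'.
Proof.
move=> es hBE hbeta hbdis t B J hBW [hcen hdis].
set e' := (fun x y => (x != y) && linked e (beta x) (beta y)).
pose B2 u := \bigcup_(x in B u) beta x.
have inW' : forall u x, u \in J -> x \in B u -> x \in W'.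
  move=> u x uJ xB; exact: (subsetP (hBW _ uJ)).
have rad : forall u, u \in J -> forall k x, x \in ball e' (B u) u k ->
    forall z, z \in beta x -> z \in ball e (B2 u) u (k * (2 * b + 1) + b).
  move=> u uJ; elim=> [|k IH] x.
    rewrite /= !inE => /andP[xB /eqP ->] z zb; rewrite mul0n add0n.
    have [_ bsub _] := hbeta _ (inW' _ _ uJ (hcen _ uJ).1).
    apply: (subsetP (ball_mono e u _ (leqnn _))) ((subsetP bsub) _ zb).
    apply/subsetP => y yb; apply/bigcupP; exists u => //; exact: (hcen _ uJ).1.
  move=> /setUP[xb z zb|]; first by apply: ball_le (IH _ xb _ zb); exact: arith_c2.
  rewrite inE => /andP[xB /existsP[y /andP[yb /andP[_ /linkedP[y0 [x0 [y0b x0b ey]]]]]]] z zb.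
  have hy0 := IH _ yb _ y0b.
  have xW := inW' _ _ uJ xB.
  have x0B2 : x0 \in B2 u by apply/bigcupP; exists x.
  have h1 := ball_step hy0 x0B2 ey.
  have [xx bsub _] := hbeta _ xW.
  have h2 : x \in ball e (beta x) x0 b by apply: ball_sym => //; exact: (subsetP bsub).
  have h3 := ball_trans h2 ((subsetP bsub) _ zb).
  have sb : beta x \subset B2 u by apply/subsetP => w wb; apply/bigcupP; exists x.
  have h4 := (subsetP (ball_mono e x0 sb (leqnn _))) _ h3.
  have := ball_trans h1 h4.
  by rewrite arith_c1.
have hsub : forall u, u \in J -> B2 u \subset W.
  move=> u uJ; apply/subsetP => z /bigcupP[x xB zb].
  have [_ _ bW] := hbeta _ (inW' _ _ uJ xB); exact: (subsetP bW).
have hmod : model e (t * (2 * b + 1) + b) B2 J.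
  split.
    move=> u uJ; split.
      apply/bigcupP; exists u; first exact: (hcen _ uJ).1.
      by have [] := hbeta _ (inW' _ _ uJ (hcen _ uJ).1).
    apply/subsetP => z /bigcupP[x xB zb]; apply: rad zb => //.
    exact: (subsetP (hcen _ uJ).2).
  move=> u w uJ wJ uw; rewrite -setI_eq0; apply/eqP/setP => z; rewrite !inE.
  apply/negP => /andP[/bigcupP[x xB zx] /bigcupP[y yB zy]].
  have xy : x != y.
    apply/negP => /eqP exy; subst y.
    have := hdis _ _ uJ wJ uw; rewrite -setI_eq0 => /eqP/setP/(_ x); by rewrite !inE xB yB.
  have := hbdis _ _ (inW' _ _ uJ xB) (inW' _ _ wJ yB) xy.
  rewrite -setI_eq0 => /eqP/setP/(_ z); by rewrite !inE zx zy.
apply: leq_trans (hBE _ B2 J hsub hmod).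
apply: subset_leq_card; apply/subsetP => [[u w]]; rewrite !inE /=.
move=> /and4P[-> -> -> /linkedP[x [y [xB yB /andP[_ /linkedP[x0 [y0 [? ? ?]]]]]]]] /=.
apply/linkedP; exists x0, y0; split => //.
- by apply/bigcupP; exists x.
- by apply/bigcupP; exists y.
Qed.

Lemma max_exists (A : Type) (Q : A -> Prop) (g : A -> nat) (N : nat) :
  (exists a, Q a) -> (forall a, Q a -> g a <= N) ->
  exists a, Q a /\ forall b, Q b -> g b <= g a.
Proof.
move=> [a0 Qa0] bnd.
suff : forall k a, Q a -> N - g a <= k -> exists a, Q a /\ forall b, Q b -> g b <= g a.
  by move=> /(_ (N - g a0) a0 Qa0 (leqnn _)).
elim=> [|k IH] a Qa hk.
  exists a; split => // b Qb; apply: leq_trans (bnd _ Qb) _; by rewrite -subn_eq0 -leqn0.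
case: (classic (forall b, Q b -> g b <= g a)) => [h|]; first by exists a.
move=> /not_all_ex_not[b hb]; have [Qb nb] := imply_to_and _ _ hb.
apply: (IH b Qb).
have lt : g a < g b by rewrite ltnNge; apply/negP.
have := bnd _ Qb; move: hk lt; clear.
move: (g a) (g b) => x y hk lt le.
lia.
Qed.

Definition int (T : Type) (s : seq T) := take (size s).-1 s.

Definition goodpath (T : finType) (e : rel T) (W U : {set T}) r v (s : seq T) : bool :=
  [&& path e v s, size s <= r, last v s \in U, last v s != v, v \notin s,
      all (mem W) s & all (fun x => x \notin U) (int s)].

Definition family (T : finType) (e : rel T) (W U : {set T}) r v (Z : {set T})
    (pi : T -> seq T) : Prop :=
  (forall z, z \in Z -> goodpath e W U r v (pi z) /\ last v (pi z) = z) /\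
  (forall z1 z2 x, z1 \in Z -> z2 \in Z -> x \in pi z1 -> x \in pi z2 -> z1 = z2).

Definition Lstmt r := forall (f : nat -> nat) (c : nat), exists K : nat,
  forall (T : finType) (e : rel T) (W U U0 : {set T}),
  symmetric e -> irreflexive e -> BEt f e W -> U \subset W -> U0 \subset U ->
  0 < #|U0| -> #|U| <= c * #|U0| ->
  (forall v, v \in U0 -> exists Z pi, family e W U r v Z pi /\ K <= #|Z|) -> False.

Lemma L0 : Lstmt 0.
Proof.
move=> f c; exists 1 => T e W U U0 _ _ _ _ _ U0n _ hfam.
have [v vU0] : exists v, v \in U0 by apply/set0Pn; rewrite -card_gt0.
have [Z [pi [[hg _] KZ]]] := hfam v vU0.
have [z zZ] : exists z, z \in Z by apply/set0Pn; rewrite -card_gt0.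
have [/and5P[_ sz _ lv _] _] := hg z zZ.
by move: sz lv; rewrite leqn0 => /nilP ->; rewrite /= eqxx.
Qed.

Lemma int_sub (T : eqType) (s : seq T) x : x \in int s -> x \in s.
Proof. exact: mem_take. Qed.

Lemma int_size (T : Type) (s : seq T) : size (int s) = (size s).-1.
Proof. by rewrite /int size_takel // leq_pred. Qed.

Lemma int_rcons (T : Type) (s : seq T) y : int (rcons s y) = s.
Proof. by rewrite /int size_rcons /= -cats1 take_size_cat. Qed.

Lemma last_int_edge (T : eqType) (e : rel T) a s : path e a s -> s != [::] ->
  e (last a (int s)) (last a s).
Proof.
case/lastP: s => [//|s y]; rewrite int_rcons last_rcons rcons_path => /andP[_ ->] //.
Qed.

Lemma path_int (T : Type) (e : rel T) a s : path e a s -> path e a (int s).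
Proof. exact: take_path. Qed.

Lemma edge_nth (T : Type) (e : rel T) v s j : path e v s -> j < size s ->
  e (last v (take j s)) (nth v s j).
Proof.
move=> ps js; have := ps; rewrite -{1}[s](cat_take_drop j) cat_path => /andP[_].
by rewrite (drop_nth v js) /= => /andP[].
Qed.

Lemma int_head (T : Type) (s : seq T) x a t : int s = a :: t -> head x s = a.
Proof. rewrite /int; case: s => [//|b [|c s]] //= [] ->; by []. Qed.

Section Step.
Variables (T : finType) (e : rel T) (W U : {set T}) (r : nat).
Hypotheses (es : symmetric e) (eirr : irreflexive e) (hUW : U \subset W).

Definition ppath (p : T * T) (s : seq T) : bool :=
  [&& p.1 \in U, p.2 \in U, p.1 != p.2 &
   [&& path e p.1 s, last p.1 s == p.2, size s <= r.+1, all (mem W) s &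
       all (fun x => x \notin U) (int s)]].

Definition pvalid (P : {set T * T}) (pi : T * T -> seq T) : Prop :=
  [/\ forall p, p \in P -> ppath p (pi p),
      forall p, p \in P -> (p.2, p.1) \notin P &
      forall p q x, p \in P -> q \in P -> x \in int (pi p) -> x \in int (pi q) -> p = q].

Variables (P : {set T * T}) (pi : T * T -> seq T).
Hypothesis hval : pvalid P pi.

Lemma ppathP p : p \in P -> [/\ p.1 \in U, p.2 \in U, p.1 != p.2, path e p.1 (pi p) &
   [/\ last p.1 (pi p) = p.2, size (pi p) <= r.+1, all (mem W) (pi p) &
       all (fun x => x \notin U) (int (pi p))]].
Proof.
case: hval => h _ _ /h /and4P[-> -> -> /and5P[-> /eqP -> -> -> ->]]; by [].
Qed.

Definition BH a := a |: \bigcup_(p in P | p.1 == a) [set x in int (pi p)].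

Lemma int_notU p x : p \in P -> x \in int (pi p) -> x \notin U.
Proof. by move=> /ppathP[_ _ _ _ [_ _ _ /allP h]] /h. Qed.

Lemma BH_model : model e r BH U.
Proof.
split.
  move=> u uU; split; first by rewrite setU11.
  apply/subsetP => x /setU1P[->|]; first by apply: (ball_le (leq0n r)); apply: (ball0 e); rewrite setU11.
  move=> /bigcupP[p /andP[pP /eqP p1] xi]; rewrite inE in xi.
  have [_ _ _ pth [_ sz _ _]] := ppathP pP.
  have hp := path_int pth; rewrite p1 in hp.
  have sub : all (mem (BH u)) (int (pi p)).
    apply/allP => y yi; rewrite /= inE; apply/orP; right.
    apply/bigcupP; exists p; first by rewrite pP p1 eqxx.
    by rewrite inE.
  have xin : x \in u :: int (pi p) by rewrite inE xi orbT.
  apply: ball_le (path_ball hp (setU11 _ _) sub xin).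
  by rewrite int_size; case: (size (pi p)) sz.
move=> u w uU wU uw; rewrite -setI_eq0; apply/eqP/setP => x; rewrite !inE.
apply/negP => /andP[hu hw].
move: hu hw => /orP[/eqP xu|/bigcupP[p /andP[pP /eqP p1] xp]] /orP[/eqP xw|/bigcupP[q /andP[qP /eqP q1] xq]].
- by move: uw; rewrite -xu -xw eqxx.
- by subst x; move: xq; rewrite inE => /(int_notU qP); rewrite uU.
- by subst x; move: xp; rewrite inE => /(int_notU pP); rewrite wU.
- rewrite inE in xp; rewrite inE in xq.
  have [_ _ h] := hval; have pq := h _ _ _ pP qP xp xq.
  by move: uw; rewrite -p1 -q1 pq eqxx.
Qed.

Lemma BH_W u : u \in U -> BH u \subset W.
Proof.
move=> uU; apply/subsetP => x /setU1P[->|]; first exact: (subsetP hUW).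
move=> /bigcupP[p /andP[pP _] xi]; rewrite inE in xi.
have [_ _ _ _ [_ _ /allP aW _]] := ppathP pP; exact: aW (int_sub xi).
Qed.

Definition Psym := P :|: [set (p.2, p.1) | p in P].

Lemma Psym_sub : Psym \subset mpairs e BH U.
Proof.
have lk : forall p, p \in P -> linked e (BH p.1) (BH p.2).
  move=> p pP; have [_ _ _ pth [lst _ _ _]] := ppathP pP.
  have ne : pi p != [::].
    apply/eqP => E; have [_ _ n _ _] := ppathP pP; by move: n; rewrite -lst E /= eqxx.
  apply/linkedP; exists (last p.1 (int (pi p))), p.2; split.
  - have := mem_last p.1 (int (pi p)); rewrite inE => /orP[/eqP->|h]; first exact: setU11.
    rewrite inE; apply/orP; right; apply/bigcupP; exists p; first by rewrite pP eqxx.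
    by rewrite inE.
  - exact: setU11.
  - by rewrite -lst; apply: last_int_edge.
apply/subsetP => q; rewrite !inE => /orP[qP|/imsetP[p pP ->]] /=.
  by have [-> -> -> _ _] := ppathP qP; rewrite lk.
have [-> -> ne _ _] := ppathP pP; rewrite eq_sym ne /=; apply: linked_sym => //; exact: lk.
Qed.

Lemma card_Psym f : BEt f e W -> #|Psym| <= 2 * f r * #|U|.
Proof.
move=> hbe; apply: leq_trans (subset_leq_card Psym_sub) _.
apply: hbe; [exact: BH_W | exact: BH_model].
Qed.

Definition Int := \bigcup_(p in P) [set x in int (pi p)].

Lemma Int_notU x : x \in Int -> x \notin U.
Proof. by move=> /bigcupP[p pP]; rewrite inE; apply: int_notU. Qed.

Definition Mset := [set p in P | 1 < size (pi p)].
Definition rep (p : T * T) := head p.1 (pi p).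

Lemma rep_int p : p \in Mset -> rep p \in int (pi p).
Proof.
rewrite inE /rep /int => /andP[_]; case: (pi p) => [|a [|b s]] //= _.
by rewrite inE eqxx.
Qed.

Lemma int_Mset p x : p \in P -> x \in int (pi p) -> p \in Mset.
Proof.
move=> pP xi; rewrite inE pP /=.
have : 0 < size (int (pi p)) by case: (int (pi p)) xi.
by rewrite int_size; case: (size (pi p)) => [|[|]].
Qed.

Lemma Mset_P p : p \in Mset -> p \in P.
Proof. by rewrite inE => /andP[]. Qed.

Lemma rep_Int p : p \in Mset -> rep p \in Int.
Proof. move=> pM; apply/bigcupP; exists p; [exact: Mset_P | by rewrite inE rep_int]. Qed.

Definition Mreps := [set rep p | p in Mset].

Definition beta x :=
  if [pick p in Mset | rep p == x] is Some p then [set y in int (pi p)] else [set x].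

Lemma beta_rep p : p \in Mset -> beta (rep p) = [set y in int (pi p)].
Proof.
move=> pM; rewrite /beta; case: pickP => [q /andP[qM /eqP rq]|/(_ p)]; last by rewrite pM eqxx.
have [_ _ h] := hval.
have -> // : q = p.
apply: (h _ _ (rep p)); [exact: Mset_P | exact: Mset_P | | exact: rep_int].
by rewrite -rq rep_int.
Qed.

Lemma beta_out x : x \notin Int -> beta x = [set x].
Proof.
move=> xI; rewrite /beta; case: pickP => [q /andP[qM /eqP rq]|//].
by move: xI; rewrite -rq rep_Int.
Qed.

Definition W' := [set x in W | (x \notin Int) || (x \in Mreps)].

Lemma W'_cases x : x \in W' -> (x \in W) /\ (x \notin Int \/ exists2 p, p \in Mset & x = rep p).
Proof.
rewrite inE => /andP[xW /orP[h|/imsetP[p pM xp]]].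
  by split => //; left.
by split => //; right; exists p.
Qed.

Lemma rep_W p : p \in Mset -> rep p \in W.
Proof.
move=> pM; have [_ _ _ _ [_ _ /allP aW _]] := ppathP (Mset_P pM).
exact: aW (int_sub (rep_int pM)).
Qed.

Lemma beta_props x : x \in W' ->
  [/\ x \in beta x, beta x \subset ball e (beta x) x r & beta x \subset W].
Proof.
move=> /W'_cases[xW [xI|[p pM ->]]].
  rewrite beta_out //; split; first exact: set11.
  - by apply/subsetP => y; rewrite inE => /eqP->; apply: (ball_le (leq0n r)); apply: (ball0 e); exact: set11.
  - by apply/subsetP => y; rewrite inE => /eqP->.
rewrite beta_rep //; split; first by rewrite inE rep_int.
- have [_ _ _ pth [_ sz aW _]] := ppathP (Mset_P pM).
  have szi : size (int (pi p)) <= r by rewrite int_size; case: (size (pi p)) sz.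
  have hi := path_int pth.
  have ri := rep_int pM.
  move: hi szi ri; case E : (int (pi p)) => [//|a t] /= /andP[_ pt] szi _.
  have ra : rep p = a by rewrite /rep; apply: int_head E.
  rewrite ra; apply/subsetP => y; rewrite inE => yi.
  have aA : a \in [set y0 in a :: t] by rewrite inE inE eqxx.
  have tA : all (mem [set y0 in a :: t]) t by apply/allP => z zt; rewrite /= inE inE zt orbT.
  exact: ball_le (ltnW szi) (path_ball pt aA tA yi).
- apply/subsetP => y; rewrite inE => yi.
  have [_ _ _ _ [_ _ /allP aW _]] := ppathP (Mset_P pM); exact: aW (int_sub yi).
Qed.

Lemma int_Int p x : p \in P -> x \in int (pi p) -> x \in Int.
Proof. by move=> pP xi; apply/bigcupP; exists p; rewrite ?inE. Qed.

Lemma beta_dis x y : x \in W' -> y \in W' -> x != y -> [disjoint beta x & beta y].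
Proof.
have [_ _ hdis] := hval.
move=> /W'_cases[_ hx] /W'_cases[_ hy] xy; rewrite -setI_eq0; apply/eqP/setP => z.
rewrite !inE; apply/negP => /andP[zx zy].
case: hx zx => [xI|[p pM xp]]; case: hy zy => [yI|[q qM yq]].
- by rewrite (beta_out xI) (beta_out yI) !inE => /eqP zy /eqP zx; move: xy; rewrite -zx -zy eqxx.
- rewrite (beta_out xI) yq (beta_rep qM) !inE => zi /eqP zx.
  by move: xI; rewrite -zx (int_Int (Mset_P qM) zi).
- rewrite (beta_out yI) xp (beta_rep pM) !inE => /eqP zy zi.
  by move: yI; rewrite -zy (int_Int (Mset_P pM) zi).
- rewrite xp yq (beta_rep pM) (beta_rep qM) !inE => zq zp.
  have pq := hdis _ _ _ (Mset_P pM) (Mset_P qM) zp zq.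
  by move: xy; rewrite xp yq pq eqxx.
Qed.

Definition e' x y := (x != y) && linked e (beta x) (beta y).

Lemma BE' f : BEt f e W -> BEt (fun t => f (t * (2 * r + 1) + r)) e' W'.
Proof.
move=> hbe; apply: (@BE_compose T f e W W' beta r es hbe); [exact: beta_props | exact: beta_dis].
Qed.

Lemma e'_sym : symmetric e'.
Proof.
move=> x y; rewrite /e' eq_sym; apply/idP/idP => /andP[-> h]; by rewrite linked_sym.
Qed.

Lemma e'_irr : irreflexive e'.
Proof. by move=> x; rewrite /e' eqxx. Qed.

Definition U' := U :|: Mreps.

Lemma U'W' : U' \subset W'.
Proof.
apply/subsetP => x; rewrite !inE => /orP[xU|xM].
  rewrite (subsetP hUW) //=; apply/orP; left; apply/negP => /Int_notU; by rewrite xU.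
rewrite xM orbT andbT; case/imsetP: xM => p pM ->; exact: rep_W.
Qed.

Lemma card_U' : #|U'| <= #|U| + #|P|.
Proof.
apply: leq_trans (leq_card_setU _ _) _; rewrite leq_add2l.
apply: leq_trans (leq_imset_card _ _) _; apply: subset_leq_card.
by apply/subsetP => p; apply: Mset_P.
Qed.

Lemma card_P_Psym : #|P| <= #|Psym|.
Proof. apply: subset_leq_card; exact: subsetUl. Qed.

Definition nb v := [set u | (v, u) \in Psym].

Lemma deg_sum (Bd : {set T}) : \sum_(v in Bd) #|nb v| <= #|Psym|.
Proof.
pose S := [set p in Psym | p.1 \in Bd].
apply: (@leq_trans #|S|); last by apply: subset_leq_card; apply/subsetP => p; rewrite inE => /andP[].
rewrite -sum1_card (partition_big (fun p : T * T => p.1) (mem Bd)); last first.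
  by move=> p; rewrite inE => /andP[].
apply: leq_sum => v vB; rewrite sum1dep_card.
have inj : injective (fun u : T => (v, u)) by move=> a b [].
rewrite -(card_imset (nb v) inj); apply: subset_leq_card.
apply/subsetP => q /imsetP[u un ->]; rewrite inE in un; rewrite inE /= eqxx andbT inE /= vB andbT; exact: un.
Qed.

Lemma gp_unpack (R : nat) v s : goodpath e W U R v s ->
  [/\ path e v s, size s <= R, last v s \in U, last v s != v &
     [/\ v \notin s, all (mem W) s & all (fun x => x \notin U) (int s)]].
Proof. by case/and5P => -> -> -> -> /and3P[-> -> ->]. Qed.

Lemma take_find_notin (s : seq T) (a : pred T) y :
  y \in take (find a s) s -> ~~ a y.
Proof.
move=> yt; have ys := mem_take yt.
have hi : index y s < find a s.
  by move: yt; rewrite in_take.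
by have := before_find (y) hi; rewrite nth_index // => ->.
Qed.

Hypothesis hmax : forall P' pi', pvalid P' pi' -> #|P'| <= #|P|.

Lemma Psym_P p : p \in P -> p \in Psym.
Proof. by move=> pP; rewrite inE pP. Qed.

Lemma Psym_swap p : p \in P -> (p.2, p.1) \in Psym.
Proof. by move=> pP; rewrite inE; apply/orP; right; apply/imsetP; exists p. Qed.

Lemma no_extend v z s : v \in U -> goodpath e W U r.+1 v s -> last v s = z ->
  z \notin nb v -> ~~ has (mem Int) s -> False.
Proof.
move=> vU /gp_unpack[pth sz zU zv [vs aW aU]] lz nbz nI.
rewrite lz in zU zv.
have vzP : (v, z) \notin P by apply: contra nbz => h; rewrite inE Psym_P.
have zvP : (z, v) \notin P by apply: contra nbz => h; rewrite inE; exact: (Psym_swap h).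
pose P2 := (v, z) |: P.
pose pi2 q := if q == (v, z) then s else pi q.
have [hpp hsw hdis] := hval.
have val2 : pvalid P2 pi2.
  split.
  - move=> q /setU1P[->|qP]; rewrite /pi2.
      rewrite eqxx /ppath /= vU zU eq_sym zv /= pth lz eqxx sz aW aU; by [].
    have -> : (q == (v, z)) = false by apply/negbTE; apply: contra vzP => /eqP <-.
    exact: hpp.
  - move=> q /setU1P[->|qP] /=; rewrite !inE negb_or.
      rewrite zvP andbT; apply/negP => /eqP [] zv'; by rewrite zv' eqxx in zv.
    rewrite (hsw _ qP) andbT; apply/negP => /eqP E.
    move: qP E; case: q => [a b] /= qP [e1 e2]; subst; by rewrite qP in zvP.
  - have nIs : forall x, x \in int s -> x \notin Int.
      move=> x xi; apply/negP => xI; move/hasPn: nI => /(_ x (int_sub xi)); by rewrite /= xI.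
    move=> q1 q2 x /setU1P[->|q1P] /setU1P[->|q2P]; rewrite /pi2 ?eqxx //.
    + have -> : (q2 == (v, z)) = false by apply/negbTE; apply: contra vzP => /eqP <-.
      by move=> /nIs xI xi2; move: xI; rewrite (int_Int q2P xi2).
    + have -> : (q1 == (v, z)) = false by apply/negbTE; apply: contra vzP => /eqP <-.
      by move=> xi1 /nIs xI; move: xI; rewrite (int_Int q1P xi1).
    + have -> : (q1 == (v, z)) = false by apply/negbTE; apply: contra vzP => /eqP <-.
      have -> : (q2 == (v, z)) = false by apply/negbTE; apply: contra vzP => /eqP <-.
      exact: hdis.
have := hmax val2; by rewrite cardsU1 vzP add1n ltnn.
Qed.

Lemma transform v (Z : {set T}) (pi0 : T -> seq T) :
  v \in U -> family e W U r.+1 v Z pi0 ->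
  exists Z' pi', family e' W' U' r v Z' pi' /\ #|Z| <= #|nb v| + r * #|Z'|.
Proof.
move=> vU [hgood hdisj].
have vI : v \notin Int by apply/negP => /Int_notU; rewrite vU.
pose ZA := [set z in Z | z \in nb v].
pose ZB := [set z in Z | has (mem Int) (pi0 z)].
have cover : Z \subset ZA :|: ZB.
  apply/subsetP => z zZ; apply/setUP; case: (boolP (z \in nb v)) => nA.
    by left; rewrite inE zZ nA.
  case: (boolP (has (mem Int) (pi0 z))) => nB; first by right; rewrite inE zZ nB.
  have [g lz] := hgood _ zZ; case: (no_extend vU g lz nA nB).
pose j z := find (mem Int) (pi0 z).
pose hit z := nth v (pi0 z) (j z).
have hitI : forall z, z \in ZB -> hit z \in Int.
  move=> z; rewrite inE => /andP[_ h]; exact: (nth_find v h).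
have jlt : forall z, z \in ZB -> j z < (size (pi0 z)).-1.
  move=> z zB; have := zB; rewrite inE => /andP[zZ h]; rewrite has_find in h.
  have [/gp_unpack[_ _ zU _ _] lz] := hgood _ zZ.
  rewrite ltn_neqAle -ltnS prednK ?h ?andbT; last by apply: leq_ltn_trans h.
  apply/negP => /eqP E; have := hitI _ zB; rewrite /hit E nth_last lz => /Int_notU.
  by rewrite -{1}lz zU.
have jsz : forall z, z \in ZB -> j z < size (pi0 z).
  move=> z zB; apply: leq_trans (jlt _ zB) _; exact: leq_pred.
have hit_in : forall z, z \in ZB -> hit z \in pi0 z.
  move=> z zB; exact: mem_nth (jsz _ zB).
have pre : forall z y, z \in ZB -> y \in take (j z) (pi0 z) ->
    [/\ y \notin Int, y \notin U & y \in W].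
  move=> z y zB yt; have := zB; rewrite inE => /andP[zZ _].
  have [/gp_unpack[_ _ _ _ [_ aW aU]] _] := hgood _ zZ.
  split.
  - exact: (take_find_notin yt).
  - apply: (allP aU); move: yt; rewrite -(take_takel _ (ltnW (jlt _ zB))); exact: mem_take.
  - exact: (allP aW) (mem_take yt).
pose newend z := if [pick p in Mset | hit z \in int (pi p)] is Some p then rep p else v.
have ne_spec : forall z, z \in ZB ->
    exists2 p, p \in Mset & newend z = rep p /\ hit z \in int (pi p).
  move=> z zB; rewrite /newend; case: pickP => [p /andP[pM hp]|none].
    by exists p.
  have := hitI _ zB => /bigcupP[p pP]; rewrite inE => hp.
  by have := none p; rewrite hp (int_Mset pP hp).
pose Z' := [set newend z | z in ZB].
pose back z' := odflt v [pick z in ZB | newend z == z'].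
have back_spec : forall z', z' \in Z' -> back z' \in ZB /\ newend (back z') = z'.
  move=> z' /imsetP[z zB ->]; rewrite /back; case: pickP => [y /andP[yB /eqP ->]|none] //=.
  by have := none z; rewrite zB eqxx.
pose pi' z' := rcons (take (j (back z')) (pi0 (back z'))) z'.
exists Z', pi'; split; last first.
  apply: leq_trans (subset_leq_card cover) _.
  apply: leq_trans (leq_card_setU _ _) _; apply: leq_add.
    by apply: subset_leq_card; apply/subsetP => z; rewrite !inE => /andP[].
  have hinj : {in ZB &, injective hit}.
    move=> z1 z2 z1B z2B h; have := z1B; have := z2B; rewrite !inE => /andP[z2Z _] /andP[z1Z _].
    apply: (hdisj _ _ (hit z1) z1Z z2Z (hit_in _ z1B)); rewrite h; exact: hit_in.
  rewrite -(card_in_imset hinj).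
  have sub : [set hit z | z in ZB] \subset \bigcup_(z' in Z') beta z'.
    apply/subsetP => x /imsetP[z zB ->]; apply/bigcupP; exists (newend z).
      by apply/imsetP; exists z.
    have [p pM [-> hp]] := ne_spec _ zB; by rewrite beta_rep // inE.
  apply: leq_trans (subset_leq_card sub) _.
  apply: leq_trans (card_bigcup_leq _ _) _.
  rewrite mulnC -sum_nat_const; apply: leq_sum => z' /imsetP[z zB ->].
  have [p pM [-> _]] := ne_spec _ zB; rewrite beta_rep // cardsE.
  apply: leq_trans (card_size _) _; rewrite int_size.
  have [_ _ _ _ [_ sz _ _]] := ppathP (Mset_P pM); by case: (size (pi p)) sz.
have rep_notv : forall p, p \in Mset -> rep p != v.
  move=> p pM; apply: contraNneq vI => <-; exact: rep_Int.
split.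
  move=> z' z'Z; have [zB nez] := back_spec _ z'Z.
  set z := back z' in zB nez *.
  have := zB; rewrite inE => /andP[zZ _].
  have [/gp_unpack[pth sz zU zv [vs aW aU]] lz] := hgood _ zZ.
  have [p pM [nep hp]] := ne_spec _ zB.
  have z'I : z' \in Int by rewrite -nez nep rep_Int.
  have z'v : z' != v by rewrite -nez nep rep_notv.
  have lst : last v (pi' z') = z' by rewrite /pi' last_rcons.
  split => //; rewrite /goodpath lst z'v.
  apply/and5P; split => //.
  - rewrite /pi' rcons_path; apply/andP; split.
      apply: (@sub_in_path _ (fun x => x \notin Int) e); last exact: take_path.
        move=> x y xI yI exy; rewrite /e' (beta_out xI) (beta_out yI).
        rewrite (_ : x != y); last by apply: contraTneq exy => ->; rewrite eirr.
        by apply/linkedP; exists x, y; rewrite !inE !eqxx.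
      apply/allP => x; rewrite inE => /orP[/eqP->//|xt].
      by have [] := pre _ _ zB xt.
    rewrite /e'; apply/andP; split.
      apply/negP => /eqP E; have := z'I; rewrite -E.
      set y := last v _.
      have : y \in v :: take (j z) (pi0 z) by exact: mem_last.
      rewrite inE => /orP[/eqP->|yt]; first by rewrite (negbTE vI).
      by have [/negbTE ->] := pre _ _ zB yt.
    have yI : last v (take (j z) (pi0 z)) \notin Int.
      have : last v (take (j z) (pi0 z)) \in v :: take (j z) (pi0 z) by exact: mem_last.
      rewrite inE => /orP[/eqP->//|yt]; by have [] := pre _ _ zB yt.
    rewrite (beta_out yI) -nez nep (beta_rep pM).
    apply/linkedP; exists (last v (take (j z) (pi0 z))), (hit z); rewrite !inE eqxx hp.
    split => //; exact: edge_nth pth (jsz _ zB).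
  - rewrite /pi' size_rcons size_take.
    have h1 := jlt _ zB.
    have h2 : j z < size (pi0 z) := jsz _ zB.
    rewrite h2; move: h1 sz; case: (size (pi0 z)) => [//|n] /= h1 sz.
    exact: leq_trans h1 sz.
  - rewrite !inE; apply/orP; right; rewrite -nez nep; apply/imsetP; by exists p.
  - apply/and3P; split.
    + rewrite /pi' mem_rcons inE negb_or eq_sym z'v /=.
      by apply/negP => /mem_take h; rewrite h in vs.
    + apply/allP => x; rewrite /pi' mem_rcons inE => /orP[/eqP->|xt].
        have z'W : z' \in W by rewrite -nez nep; exact: rep_W.
        have z'M : z' \in Mreps by rewrite -nez nep; apply/imsetP; exists p.
        by rewrite /= inE z'W z'M orbT.
      have [xI _ xW] := pre _ _ zB xt; by rewrite /= inE xW xI.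
    + rewrite /pi' int_rcons; apply/allP => x xt.
      have [xI xU _] := pre _ _ zB xt; rewrite !inE negb_or xU /=.
      by apply: contra xI => /imsetP[q qM ->]; apply: rep_Int.
move=> z1' z2' x z1Z z2Z.
have [z1B ne1] := back_spec _ z1Z; have [z2B ne2] := back_spec _ z2Z.
have Z'I : forall z', z' \in Z' -> z' \in Int.
  move=> z' /imsetP[z zB ->]; have [p pM [-> _]] := ne_spec _ zB; exact: rep_Int.
rewrite /pi' !mem_rcons !inE => /orP[/eqP x1|x1] /orP[/eqP x2|x2].
- by rewrite -x1 -x2.
- by have [] := pre _ _ z2B x2; rewrite x1 Z'I.
- by have [] := pre _ _ z1B x1; rewrite x2 Z'I.
- have := z1B; have := z2B; rewrite !inE => /andP[z2Z' _] /andP[z1Z' _].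
  have := hdisj _ _ x z1Z' z2Z' (mem_take x1) (mem_take x2).
  move=> h; rewrite -ne1 -ne2; congr newend; exact: h.
Qed.

End Step.

Lemma arithA1 b c d u : b * (4 * c * d + 1) <= 2 * d * (c * u) -> 2 * b <= u.
Proof. nia. Qed.

Lemma arithA2 U' U Pn d c u0 u0' : U' <= U + Pn -> Pn <= 2 * d * U -> U <= c * u0 ->
  u0 <= 2 * u0' -> U' <= 2 * c * (1 + 2 * d) * u0'.
Proof.
move=> h0 h1 h2 h3.
have e1 : U' <= (1 + 2 * d) * U by rewrite mulnDl mul1n; apply: leq_trans h0 _; rewrite leq_add2l.
have e2 : (1 + 2 * d) * U <= (1 + 2 * d) * (c * (2 * u0')).
  rewrite leq_mul2l; apply/orP; right; apply: leq_trans h2 _; rewrite leq_mul2l h3 orbT //.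
have -> : 2 * c * (1 + 2 * d) * u0' = (1 + 2 * d) * (c * (2 * u0')).
  by nia.
exact: leq_trans e1 e2.
Qed.

Lemma arithA3 D0 r K' Z nb Z' : D0 + r * K' + 1 <= Z -> Z <= nb + r * Z' -> nb <= D0 -> K' <= Z'.
Proof. nia. Qed.

Lemma Lstep r : Lstmt r -> Lstmt r.+1.
Proof.
move=> IH f c.
pose d := f r.
pose f' := fun t => f (t * (2 * r + 1) + r).
pose c' := 2 * c * (1 + 2 * d).
have [K' hK'] := IH f' c'.
pose D0 := 4 * c * d.
exists (D0 + r * K' + 1).
move=> T e W U U0 es eirr hbe hUW hU0U U0pos hUc hfam.
have [[P pi] [hval hmax]] : exists a : {set T * T} * (T * T -> seq T),
    pvalid e W U r a.1 a.2 /\ forall b, pvalid e W U r b.1 b.2 -> #|b.1| <= #|a.1|.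
  apply: (@max_exists _ (fun a => pvalid e W U r a.1 a.2) (fun a => #|a.1|) #|{: T * T}|).
    exists (set0, fun _ => [::]); split => /=; by move=> p; rewrite inE.
  by move=> a _; apply: max_card.
simpl in hval, hmax.
have hmax' : forall P' pi', pvalid e W U r P' pi' -> #|P'| <= #|P|.
  by move=> P' pi' h; exact: (hmax (P', pi')).
have cPsym := card_Psym es hUW hval hbe.
pose Bad := [set v in U0 | D0 < #|nb P v|].
have badsum : #|Bad| * (D0 + 1) <= 2 * d * (c * #|U0|).
  apply: (@leq_trans (\sum_(v in Bad) #|nb P v|)).
    rewrite -sum_nat_const; apply: leq_sum => v; by rewrite inE addn1 => /andP[].
  apply: leq_trans (deg_sum P Bad) _; apply: leq_trans cPsym _.
  exact: leq_mul (leqnn _) hUc.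
have bad2 : 2 * #|Bad| <= #|U0| by apply: (arithA1 (c := c) (d := d)).
pose U0' := U0 :\: Bad.
have BU0 : Bad \subset U0 by apply/subsetP => v; rewrite inE => /andP[].
have cc : #|U0'| + #|Bad| = #|U0|.
  rewrite cardsD; have -> : U0 :&: Bad = Bad by apply/setIidPr.
  by rewrite subnK // subset_leq_card.
have cU0' : #|U0| <= 2 * #|U0'|.
  move: bad2 cc; clear; lia.
have H1 := hK' T (e' e P pi) (W' W P pi) (U' U P pi) U0'; refine (H1 _ _ _ _ _ _ _ _).
- exact: e'_sym.
- exact: e'_irr.
- exact: (BE' es hval hbe).
- exact: (U'W' hUW hval).
- apply/subsetP => v; rewrite inE => /andP[_ vU0]; rewrite inE (subsetP hU0U) //.
- move: cU0' U0pos; clear; lia.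
- apply: (arithA2 (card_U' U P pi) (leq_trans (card_P_Psym P) cPsym) hUc cU0').
move=> v; rewrite inE => /andP[vnB vU0].
have [Z [pi0 [fam KZ]]] := hfam v vU0.
have [Z' [pi' [fam' cZ]]] := transform eirr hval hmax' (subsetP hU0U _ vU0) fam.
exists Z', pi'; split => //.
apply: (arithA3 KZ cZ).
by move: vnB; rewrite inE vU0 /= -leqNgt.
Qed.

Lemma Lall r : Lstmt r.
Proof. elim: r => [|r IH]; [exact: L0 | exact: Lstep]. Qed.

Lemma menger (T : finType) (e : rel T) (U : {set T}) r K v : v \in U ->
  (forall S : {set T}, v \notin S -> #|S| <= r * K ->
     exists u, [/\ u \in ball e (~: S) v r, u != v & u \in U]) ->
  exists Z pi, family e setT U r v Z pi /\ K <= #|Z|.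
Proof.
move=> vU hsep.
have [[Z pi] [fam hmax]] : exists a : {set T} * (T -> seq T),
    family e setT U r v a.1 a.2 /\ forall b, family e setT U r v b.1 b.2 -> #|b.1| <= #|a.1|.
  apply: (@max_exists _ (fun a => family e setT U r v a.1 a.2) (fun a => #|a.1|) #|T|).
    exists (set0, fun _ => [::]); split => /=; by move=> z; rewrite inE.
  by move=> a _; apply: max_card.
simpl in fam, hmax.
case: (leqP K #|Z|) => [KZ|ZK]; first by exists Z, pi.
exfalso.
case: fam => [hgood hdisj].
pose S := \bigcup_(z in Z) [set x in pi z].
have zS : forall z, z \in Z -> z \in S.
  move=> z zZ; have [/gp_unpack[_ _ _ lv _] lz] := hgood _ zZ.
  apply/bigcupP; exists z => //; rewrite inE.
  have := mem_last v (pi z); rewrite lz inE => /orP[/eqP zv|//].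
  by rewrite lz zv eqxx in lv.
have vS : v \notin S.
  apply/negP => /bigcupP[z zZ]; rewrite inE => vz.
  have [/gp_unpack[_ _ _ _ [vn _ _]] _] := hgood _ zZ; by rewrite vz in vn.
have cS : #|S| <= r * K.
  apply: leq_trans (card_bigcup_leq _ _) _.
  apply: (@leq_trans (\sum_(z in Z) r)).
    apply: leq_sum => z zZ; rewrite cardsE; apply: leq_trans (card_size _) _.
    by have [/gp_unpack[_ sz _ _ _] _] := hgood _ zZ.
  rewrite sum_nat_const mulnC leq_mul2l (ltnW ZK) orbT //.
have [u [ub uv uU]] := hsep S vS cS.
have [s [ps ls ss aS vs]] := ball_path ub uv.
have us : u \in s.
  have := mem_last v s; rewrite ls inE => /orP[/eqP uv'|//].
  by rewrite uv' eqxx in uv.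
have hasU : has (mem U) s by apply/hasP; exists u.
pose jj := find (mem U) s.
have jjs : jj < size s by rewrite -has_find.
pose z0 := nth v s jj.
pose s' := rcons (take jj s) z0.
have z0U : z0 \in U by apply: (nth_find v hasU).
have sub' : forall x, x \in s' -> x \in s.
  move=> x; rewrite mem_rcons inE => /orP[/eqP->|/mem_take //]; exact: mem_nth.
have notS : forall x, x \in s' -> x \notin S.
  move=> x /sub' xs; have := allP aS x xs; by rewrite /= inE.
have z0Z : z0 \notin Z.
  apply/negP => /zS; apply/negP; apply: notS; by rewrite mem_rcons inE eqxx.
pose pi2 z := if z == z0 then s' else pi z.
have fam2 : family e setT U r v (z0 |: Z) pi2.
  split.
    move=> z /setU1P[->|zZ]; rewrite /pi2.
      rewrite eqxx /goodpath /s' last_rcons z0U.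
      have z0v : z0 != v.
        apply/negP => /eqP E; move: vs; rewrite -E; by rewrite mem_nth.
      rewrite z0v; split => //; apply/and5P; split => //.
      - rewrite rcons_path take_path //=; exact: edge_nth.
      - by rewrite size_rcons size_take jjs; apply: leq_trans jjs ss.
      - apply/and3P; split.
        + by apply/negP => /sub' h; rewrite h in vs.
        + by apply/allP => x _; rewrite inE.
        + rewrite int_rcons; apply/allP => x xt; exact: take_find_notin xt.
    have -> : (z == z0) = false by apply/negbTE; apply: contraNneq z0Z => <-.
    exact: hgood.
  move=> z1 z2 x; rewrite /pi2 => /setU1P[->|z1Z] /setU1P[->|z2Z]; rewrite ?eqxx //.
  - have -> : (z2 == z0) = false by apply/negbTE; apply: contraNneq z0Z => <-.
    move=> xs' xp; have xS : x \in S by apply/bigcupP; exists z2 => //; rewrite inE.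
    by move: (notS _ xs'); rewrite xS.
  - have -> : (z1 == z0) = false by apply/negbTE; apply: contraNneq z0Z => <-.
    move=> xp xs'; have xS : x \in S by apply/bigcupP; exists z1 => //; rewrite inE.
    by move: (notS _ xs'); rewrite xS.
  - have -> : (z1 == z0) = false by apply/negbTE; apply: contraNneq z0Z => <-.
    have -> : (z2 == z0) = false by apply/negbTE; apply: contraNneq z0Z => <-.
    exact: hdisj.
have := hmax (z0 |: Z, pi2) fam2; by rewrite /= cardsU1 z0Z add1n ltnn.
Qed.

Lemma ranked_grow G r m :
  (forall i, ranked G r m i != setT -> exists v, v \notin ranked G r m i /\ v \in ranked G r m i.+1) ->
  forall v, finite_rank G r m v.
Proof.
move=> hg.
have h : forall i, i <= #|ranked G r m i| \/ ranked G r m i = setT.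
  elim=> [|i [IH|IH]]; first by left.
  - case: (eqVneq (ranked G r m i) setT) => [E|ne].
      right; apply/eqP; rewrite eqEsubset subsetT /= -E; exact: ranked_mono (leqnSn i).
    have [v [vn vi]] := hg _ ne; left.
    have sub : v |: ranked G r m i \subset ranked G r m i.+1.
      by apply/subsetP => x /setU1P[->//|xi]; apply: (subsetP (ranked_mono G r m (leqnSn i))).
    apply: leq_trans (subset_leq_card sub); by rewrite cardsU1 vn add1n ltnS.
  - right; apply/eqP; rewrite eqEsubset subsetT /= -IH; exact: ranked_mono (leqnSn i).
move=> v; exists (gn G); case: (h (gn G)) => [c|E]; last by rewrite E inE.
apply/negPn/negP => vn.
have sub : ranked G r m (gn G) \subset [set~ v].
  by apply/subsetP => x xi; rewrite !inE; apply: contraNneq vn => <-.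
have := subset_leq_card sub; rewrite cardsC1 card_ord => h2.
have hv : 0 < gn G by apply: leq_ltn_trans (ltn_ord v).
have aux : forall n, 0 < n -> n <= n.-1 -> False by case=> //= n _; rewrite ltnn.
exact: aux hv (leq_trans c h2).
Qed.

Lemma dir1 (C : graph -> Prop) : bounded_expansion C ->
  forall r : nat, exists m : nat, forall G : graph, C G -> forall v : gV G, finite_rank G r m v.
Proof.
move=> [f hf] r; have [K hK] := Lall r f 1.
exists (r * K) => G CG.
have hbe : BEt f (gadj (g:=G)) setT := BE_graph hf CG.
apply: ranked_grow => i ne.
apply: NNPP => hno.
pose U := ~: ranked G r (r * K) i.
apply: (hK (gV G) (gadj (g:=G)) setT U U (@gsym G) (@girr G) hbe (subsetT _) (subxx _)).
- rewrite card_gt0; apply: contra ne => /eqP U0; apply/eqP.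
  by rewrite -[ranked _ _ _ _]setCK -/U U0 setC0.
- by rewrite mul1n.
move=> v vU; apply: (menger (K := K) vU) => S vS cS.
apply: NNPP => hno2; apply: hno; exists v; split; first by rewrite inE in vU.
rewrite /= inE; apply/orP; right; rewrite inE; apply/existsP; exists S.
rewrite vS cS /=; apply/subsetP => u; rewrite !inE => /andP[uv ub].
apply/negPn/negP => un; apply: hno2; exists u; split => //; by rewrite inE.
Qed.

Lemma dir2 (C : graph -> Prop) :
  (forall r : nat, exists m : nat, forall G : graph, C G -> forall v : gV G, finite_rank G r m v) ->
  bounded_expansion C.
Proof.
move=> h.
pose g r := proj1_sig (constructive_indefinite_description _ (h r)).
have hg : forall r G, C G -> forall v : gV G, finite_rank G r (g r) v.
  move=> r; exact: (proj2_sig (constructive_indefinite_description _ (h r))).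
exists (fun r => (g (4 * r + 1)).+1 ^ (4 * r + 1)) => G CG r H sm.
exact: (minor_density (hg (4 * r + 1) G CG) sm).
Qed.


Theorem theorem1p4 (C : graph -> Prop) :
  bounded_expansion C <->
  (forall r : nat, exists m : nat,
     forall G : graph, C G -> forall v : gV G, finite_rank G r m v).
Proof.
split; [exact: dir1 | exact: dir2].
Qed.
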